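(* Let $P\in W^{(l)}\setminus\{0\}$ and let $(\rho_1,\sigma_1)>(\rho_2,\sigma_2)$ be consecutive elements of $\overline{\mathrm{Val}}(P)$ (no element of $\overline{\mathrm{Val}}(P)$ lies strictly between them). Let $(\rho,\sigma)\in\mathfrak V$. (1) If $(\rho_1,\sigma_1)\in\mathrm{Val}(P)$ and $(\rho_1,\sigma_1)>(\rho,\sigma)\ge(\rho_2,\sigma_2)$, then $\mathrm{Succ}_{\rho,\sigma}(P)$ is defined and equals $(\rho_1,\sigma_1)$. (2) If $(\rho_2,\sigma_2)\in\mathrm{Val}(P)$ and $(\rho_1,\sigma_1)\ge(\rho,\sigma)>(\rho_2,\sigma_2)$, then $\mathrm{Pred}_{\rho,\sigma}(P)$ is defined and equals $(\rho_2,\sigma_2)$. (3) If $(\rho_1,\sigma_1)>(\rho,\sigma)>(\rho_2,\sigma_2)$, then $\{\mathrm{st}_{\rho_1,\sigma_1}(P)\}=\mathrm{Supp}(\ell_{\rho,\sigma}(P))=\{\mathrm{en}_{\rho_2,\sigma_2}(P)\}$.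
   Context: $K$ is a field of characteristic zero, $l\in\mathbb{N}$. $W^{(l)}$ is the associative $K$-algebra with $K$-basis $\{X^{i/l}Y^j:i\in\mathbb{Z},j\in\mathbb{N}_0\}$, powers of $X$ multiplying as Laurent monomials and $[Y,X^\alpha]=\alpha X^{\alpha-1}$. $\Psi^{(l)}(X^{i/l}Y^j)=x^{i/l}y^j\in K[x^{\pm1/l},y]$; supports are sets of exponents with nonzero coefficient. $\overline{\mathfrak V}=\{(\rho,\sigma)\in\mathbb{Z}^2:\gcd(\rho,\sigma)=1,\rho+\sigma\ge0\}$, $\mathfrak V$ the subset with $\rho+\sigma>0$; $v_{\rho,\sigma}(a,b)=\rho a+\sigma b$. For $P\ne0$: $v_{\rho,\sigma}(P)=\max_{\mathrm{Supp}(P)}v_{\rho,\sigma}$; $\ell_{\rho,\sigma}(P)$ = sum of terms of $\Psi^{(l)}(P)$ attaining it. $\mathrm{st}_{\rho,\sigma}(P)$: among points $(a,b)\in\mathrm{Supp}(\ell_{\rho,\sigma}(P))$ maximizing $a-b$, the one with largest $a$; $\mathrm{en}_{\rho,\sigma}(P)$: among those maximizing $b-a$, the one with largest $b$. $\mathrm{Val}(P)=\{(\rho,\sigma)\in\mathfrak V:\#\mathrm{Supp}(\ell_{\rho,\sigma}(P))>1\}$, $\overline{\mathrm{Val}}(P)=\mathrm{Val}(P)\cup\{(1,-1),(-1,1)\}$. Total order on $\overline{\mathfrak V}$: $(1,-1)<(\rho,\sigma)<(-1,1)$ for $(\rho,\sigma)\in\mathfrak V$, and on $\mathfrak V$, $(\rho_1,\sigma_1)\le(\rho,\sigma)$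 iff $\rho_1\sigma-\sigma_1\rho\ge0$. For $(c,d)\in\frac1l\mathbb{Z}\times\mathbb{Z}$ not a multiple of $(1,1)$, $\mathrm{val}(c,d)$ is the unique $(\rho',\sigma')\in\mathfrak V$ with $\rho'c+\sigma'd=0$. For $(\rho,\sigma)\in\mathfrak V$ put $\mathrm{en}=\mathrm{en}_{\rho,\sigma}(P)$, $\mathrm{st}=\mathrm{st}_{\rho,\sigma}(P)$, $\mathrm{Valsup}=\{\mathrm{val}((a,b)-\mathrm{en}):(a,b)\in\mathrm{Supp}(P),\ v_{-1,1}(a,b)>v_{-1,1}(\mathrm{en})\}$, $\mathrm{Valinf}=\{\mathrm{val}((a,b)-\mathrm{st}):(a,b)\in\mathrm{Supp}(P),\ v_{1,-1}(a,b)>v_{1,-1}(\mathrm{st})\}$; $\mathrm{Succ}_{\rho,\sigma}(P):=\min\mathrm{Valsup}$ (defined when $\mathrm{Valsup}\ne\emptyset$) and $\mathrm{Pred}_{\rho,\sigma}(P):=\max\mathrm{Valinf}$ (defined when $\mathrm{Valinf}\ne\emptyset$). *)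

(* Defs.v *)
From HB Require Import structures.
From mathcomp Require Import all_boot all_order all_algebra.
From mathcomp Require Import finmap.
Set Implicit Arguments. Unset Strict Implicit. Unset Printing Implicit Defensive.
Import Order.TTheory GRing.Theory Num.Theory.
Local Open Scope ring_scope.


(* Elements of W^(l) are represented by their (finitely supported) coefficient
   families w.r.t. the K-basis X^{i/l} Y^j, indexed by (i, j) : int * nat.
   The multiplication of W^(l) plays no role in the statement. *)
Definition Weyl (K : fieldType) := {fsfun int * nat -> K with 0}.

(* the exponent (i/l, j) of the monomial x^{i/l} y^j = Psi^(l)(X^{i/l} Y^j) *)
Definition pt (l : nat) (k : int * nat) : rat * rat := (k.1%:~R / l%:R, k.2%:R).

Definition Supp (K : fieldType) (l : nat) (P : Weyl K) : {fset rat * rat} :=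
  [fset pt l k | k in finsupp P]%fset.

Definition v (d : int * int) (p : rat * rat) : rat := d.1%:~R * p.1 + d.2%:~R * p.2.

Definition ellSupp (K : fieldType) (l : nat) (d : int * int) (P : Weyl K) : {fset rat * rat} :=
  [fset p in Supp l P | all (fun q => v d q <= v d p) (Supp l P)]%fset.

Definition st (K : fieldType) (l : nat) (d : int * int) (P : Weyl K) : rat * rat :=
  let L := ellSupp l d P in
  head (0, 0) (enum_fset [fset p in L | all (fun q =>
     (q.1 - q.2 < p.1 - p.2) || ((q.1 - q.2 == p.1 - p.2) && (q.1 <= p.1))) L]%fset).

Definition en (K : fieldType) (l : nat) (d : int * int) (P : Weyl K) : rat * rat :=
  let L := ellSupp l d P in
  head (0, 0) (enum_fset [fset p in L | all (fun q =>
     (q.2 - q.1 < p.2 - p.1) || ((q.2 - q.1 == p.2 - p.1) && (q.2 <= p.2))) L]%fset).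

Definition inV (d : int * int) : bool := (gcdz d.1 d.2 == 1) && (0 < d.1 + d.2).
Definition inVbar (d : int * int) : bool := (gcdz d.1 d.2 == 1) && (0 <= d.1 + d.2).

Definition leV (d1 d : int * int) : bool :=
  if d1 == (1, -1) then true
  else if d == (-1, 1) then true
  else if d1 == (-1, 1) then false
  else if d == (1, -1) then false
  else 0 <= d1.1 * d.2 - d1.2 * d.1.
Definition ltV (d1 d : int * int) : bool := leV d1 d && (d1 != d).

Definition Val (K : fieldType) (l : nat) (P : Weyl K) (d : int * int) : bool :=
  inV d && (1 < #|` ellSupp l d P|)%N.
Definition ValBar (K : fieldType) (l : nat) (P : Weyl K) (d : int * int) : bool :=
  [|| Val l P d, d == (1, -1) | d == (-1, 1)].

Definition is_val (c : rat * rat) (e : int * int) : Prop :=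
  inV e /\ v e c = 0.

Definition psub (p q : rat * rat) : rat * rat := (p.1 - q.1, p.2 - q.2).

Definition Valsup (K : fieldType) (l : nat) (d : int * int) (P : Weyl K) (e : int * int) : Prop :=
  exists2 p, p \in Supp l P &
    v (-1, 1) (en l d P) < v (-1, 1) p /\ is_val (psub p (en l d P)) e.

Definition Valinf (K : fieldType) (l : nat) (d : int * int) (P : Weyl K) (e : int * int) : Prop :=
  exists2 p, p \in Supp l P &
    v (1, -1) (st l d P) < v (1, -1) p /\ is_val (psub p (st l d P)) e.

Definition SuccIs (K : fieldType) (l : nat) (d : int * int) (P : Weyl K) (e : int * int) : Prop :=
  Valsup l d P e /\ forall e', Valsup l d P e' -> leV e e'.

Definition PredIs (K : fieldType) (l : nat) (d : int * int) (P : Weyl K) (e : int * int) : Prop :=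
  Valinf l d P e /\ forall e', Valinf l d P e' -> leV e' e.

(* Main.v *)
Require Import Defs.
From HB Require Import structures.
From mathcomp Require Import all_boot all_order all_algebra.
From mathcomp Require Import finmap.
From mathcomp Require Import ring lra zify.
Import Order.TTheory GRing.Theory Num.Theory.
Local Open Scope ring_scope.

Definition ell (S : {fset rat * rat}) (d : int * int) : {fset rat * rat} :=
  [fset p in S | all (fun q => v d q <= v d p) S]%fset.

Lemma ellE (K : fieldType) l d (P : Weyl K) : ellSupp l d P = ell (Supp l P) d.
Proof. by []. Qed.


Lemma in_ell S d p : p \in ell S d <-> p \in S /\ forall q, q \in S -> v d q <= v d p.
Proof.
rewrite !inE /=; split.
  by move=> /andP[h /allP h2]; split.
by move=> [h1 h2]; rewrite h1 /=; apply/allP.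
Qed.

Lemma head_in (T : choiceType) (x0 x : T) (F : {fset T}) : x \in F -> head x0 (enum_fset F) \in F.
Proof.
move=> h; suff : head x0 (enum_fset F) \in enum_fset F by [].
have : x \in enum_fset F by [].
by case: (enum_fset F) => //= a s _; rewrite mem_head.
Qed.

Lemma exists_max (T : eqType) (R : rel T) (s : seq T) (x0 : T) :
  x0 \in s ->
  (forall x y, x \in s -> y \in s -> R x y || R y x) ->
  (forall x y z, x \in s -> y \in s -> z \in s -> R x y -> R y z -> R x z) ->
  exists2 m, m \in s & forall q, q \in s -> R q m.
Proof.
elim: s x0 => [//|a s IH] x0 _ Htot Htr.
have Raa : R a a by have := Htot a a; rewrite mem_head orbb; apply.
case: s IH Htot Htr => [|b s] IH Htot Htr.
  by exists a; rewrite ?mem_head // => q; rewrite inE => /eqP->.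
have [||m hm Hm] := IH b (mem_head _ _).
- by move=> x y hx hy; apply: Htot; rewrite inE (hx, hy) orbT.
- by move=> x y z hx hy hz; apply: Htr; rewrite inE ?hx ?hy ?hz orbT.
- have := Htot a m; rewrite mem_head inE hm orbT => /(_ isT isT) /orP[ham|hma].
  + exists m; first by rewrite inE hm orbT.
    move=> q; rewrite in_cons => /orP[/eqP->//|hq]; exact: (Hm q hq).
  + exists a; first by rewrite mem_head.
    move=> q; rewrite in_cons => /orP[/eqP->//|hq].
    have sub x : x \in b :: s -> x \in [:: a, b & s] by move=> hx; rewrite in_cons hx orbT.
    exact: (Htr q m a (sub _ hq) (sub _ hm) (mem_head _ _) (Hm q hq) hma).
Qed.

Lemma numq_eq (x : rat) : (numq x)%:~R = x * (denq x)%:~R :> rat.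
Proof.
have hd : (denq x)%:~R != 0 :> rat by rewrite intr_eq0; apply: lt0r_neq0; exact: denq_gt0.
by rewrite -{2}(divq_num_den x) mulfVK.
Qed.

Lemma prim_exists (x y : rat) : 0 < x + y ->
  exists e : int * int, inV e /\ exists2 k : rat, 0 < k & (e.1%:~R = k * x /\ e.2%:~R = k * y).
Proof.
move=> hxy.
set X := numq x * denq y; set Y := numq y * denq x.
set D : rat := (denq x * denq y)%:~R.
have hD : 0 < D by rewrite ltr0z mulr_gt0 ?denq_gt0.
have hX : X%:~R = D * x.
  by rewrite /X /D !intrM numq_eq; ring.
have hY : Y%:~R = D * y.
  by rewrite /Y /D !intrM numq_eq; ring.
set g := gcdz X Y.
have g0 : 0 <= g by rewrite /g /gcdz.
have gn0 : g != 0.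
  rewrite /g gcdz_eq0; apply/negP => /andP[/eqP hX0 /eqP hY0].
  move: hX hY; rewrite hX0 hY0 => hX hY.
  have : D * (x + y) = 0 by rewrite mulrDr -hX -hY addr0.
  by move/eqP; rewrite mulf_eq0 (gt_eqF hD) (gt_eqF hxy).
have g0' : 0 < g by rewrite lt_neqAle eq_sym gn0 g0.
set e1 := (X %/ g)%Z; set e2 := (Y %/ g)%Z.
have he1 : e1 * g = X by apply: divzK; exact: dvdz_gcdl.
have he2 : e2 * g = Y by apply: divzK; exact: dvdz_gcdr.
have hgcd : gcdz e1 e2 = 1.
  have := mulz_gcdl e1 e2 g; rewrite he1 he2 -/g abszE gtr0_norm //.
  by move=> /eqP; rewrite -{2}[g]mul1r (inj_eq (mulIf gn0)) => /eqP.
have hgR : (0 : rat) < g%:~R by rewrite ltr0z.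
exists (e1, e2); split.
  rewrite /inV /= hgcd eqxx /=.
  rewrite -(ltr0z rat) intrD.
  have -> : (e1%:~R : rat) = D / g%:~R * x.
    apply: (mulIf (lt0r_neq0 hgR)); rewrite -intrM he1 hX; field; exact: lt0r_neq0.
  have -> : (e2%:~R : rat) = D / g%:~R * y.
    apply: (mulIf (lt0r_neq0 hgR)); rewrite -intrM he2 hY; field; exact: lt0r_neq0.
  by rewrite -mulrDr mulr_gt0 // divr_gt0.
exists (D / g%:~R); first by rewrite divr_gt0.
split => /=.
  apply: (mulIf (lt0r_neq0 hgR)); rewrite -intrM he1 hX; field; exact: lt0r_neq0.
apply: (mulIf (lt0r_neq0 hgR)); rewrite -intrM he2 hY; field; exact: lt0r_neq0.
Qed.

Lemma prim_uniq (e f : int * int) : inV e -> inV f -> e.1 * f.2 - e.2 * f.1 = 0 -> e = f.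
Proof.
case: e f => [e1 e2] [f1 f2] /andP[/= /eqP he se] /andP[/= /eqP hf sf] hc.
have [u [w huw]] := Bezoutz e1 e2; rewrite he in huw.
have [u' [w' huw']] := Bezoutz f1 f2; rewrite hf in huw'.
set t := u * f1 + w * f2; set t' := u' * e1 + w' * e2.
simpl in hc.
have h1 : f1 = t * e1.
  have : f1 - t * e1 = f1 * (1 - (u*e1 + w*e2)) - w * (e1*f2 - e2*f1) by rewrite /t; ring.
  by rewrite huw hc subrr !mulr0 ?subr0 ?addr0 => /eqP; rewrite subr_eq0 => /eqP.
have h2 : f2 = t * e2.
  have : f2 - t * e2 = f2 * (1 - (u*e1 + w*e2)) + u * (e1*f2 - e2*f1) by rewrite /t; ring.
  by rewrite huw hc subrr !mulr0 ?subr0 ?addr0 => /eqP; rewrite subr_eq0 => /eqP.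
have h3 : e1 = t' * f1.
  have : e1 - t' * f1 = e1 * (1 - (u'*f1 + w'*f2)) + w' * (e1*f2 - e2*f1) by rewrite /t'; ring.
  by rewrite huw' hc subrr !mulr0 ?subr0 ?addr0 => /eqP; rewrite subr_eq0 => /eqP.
have h4 : e2 = t' * f2.
  have : e2 - t' * f2 = e2 * (1 - (u'*f1 + w'*f2)) - u' * (e1*f2 - e2*f1) by rewrite /t'; ring.
  by rewrite huw' hc subrr !mulr0 ?subr0 ?addr0 => /eqP; rewrite subr_eq0 => /eqP.
have hs : f1 + f2 = t * (e1 + e2) by rewrite h1 h2 mulrDr.
have hs' : e1 + e2 = t' * (f1 + f2) by rewrite h3 h4 mulrDr.
have htt : t' * t = 1.
  have : (t' * t - 1) * (e1 + e2) = 0 by rewrite mulrBl -mulrA -hs -hs' mul1r subrr.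
  by move/eqP; rewrite mulf_eq0 (gt_eqF se) orbF subr_eq0 => /eqP.
have tpos : 0 < t.
  by move: sf; rewrite hs pmulr_lgt0.
have t'pos : 0 < t' by rewrite -(pmulr_lgt0 _ tpos) htt.
have : 1 * t <= t' * t by rewrite ler_pM2r // ; lia.
rewrite htt mul1r => tle.
have ht : t = 1 by lia.
by rewrite h1 h2 ht !mul1r.
Qed.
Definition dr (d : int * int) : rat * rat := (d.1%:~R, d.2%:~R).
Definition cr (x y : rat * rat) : rat := x.1 * y.2 - x.2 * y.1.
Definition VB (x : int * int) := [\/ inV x, x = (1, -1) | x = (-1, 1)].

Lemma cr_int (e f : int * int) : (e.1 * f.2 - e.2 * f.1)%:~R = cr (dr e) (dr f).
Proof. by rewrite /cr /dr /= intrD intrN !intrM. Qed.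

Lemma inV_sum e : inV e -> 0 < (dr e).1 + (dr e).2.
Proof. by case/andP=> _ h; rewrite /dr /= -intrD ltr0z. Qed.

Lemma inV_ne e : inV e -> (e == (1, -1)) = false /\ (e == (-1, 1)) = false.
Proof.
case: e => a b /andP[_ /= h]; split; apply/negP => /eqP [ha hb]; move: h; rewrite ha hb //.
Qed.

Lemma le_cr e x : inV e -> VB x ->
  leV e x = (0 <= cr (dr e) (dr x)) /\ leV x e = (0 <= cr (dr x) (dr e)).
Proof.
move=> he hx; have [he1 he2] := inV_ne e he; have hs := inV_sum e he.
case: hx => [hx|->|->].
- have [hx1 hx2] := inV_ne x hx.
  by rewrite /leV he1 he2 hx1 hx2 -!cr_int !ler0z.
- rewrite /leV he1 he2 /=; split; [apply/esym/negbTE; rewrite -ltNge | apply/esym];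
    move: hs; rewrite /cr /dr /= => hs; lra.
- rewrite /leV he1 he2 /=; split; [apply/esym | apply/esym/negbTE; rewrite -ltNge];
    move: hs; rewrite /cr /dr /= => hs; lra.
Qed.

Lemma lt_cr e x : inV e -> VB x ->
  ltV e x = (0 < cr (dr e) (dr x)) /\ ltV x e = (0 < cr (dr x) (dr e)).
Proof.
move=> he hx; have [h1 h2] := le_cr e x he hx; rewrite /ltV h1 h2.
have hs := inV_sum e he.
have hneq : (e != x) = (cr (dr e) (dr x) != 0).
  case: hx => [hx|->|->].
  - apply/idP/idP.
      by apply: contra => /eqP h; apply/eqP/prim_uniq => //; apply/eqP; rewrite -(intr_eq0 rat) cr_int h.
    by apply: contra => /eqP->; rewrite /cr mulrC subrr.
  - have [-> _] := inV_ne e he; apply/esym/negbT/negbTE; move: hs; rewrite /cr /dr /= => hs; apply/eqP; lra.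
  - have [_ ->] := inV_ne e he; apply/esym/negbT/negbTE; move: hs; rewrite /cr /dr /= => hs; apply/eqP; lra.
have hcc : cr (dr x) (dr e) = - cr (dr e) (dr x) by rewrite /cr; ring.
rewrite hneq (eq_sym x e) hneq hcc oppr_ge0 oppr_gt0.
by case: (ltgtP (cr (dr e) (dr x)) 0).
Qed.

Definition dot (x y : rat * rat) : rat := x.1 * y.1 + x.2 * y.2.

Lemma card2 (S : {fset rat * rat}) p q : p \in S -> q \in S -> p != q -> (1 < #|` S|)%N.
Proof.
move=> hp hq hpq; rewrite (cardfsD1 p) hp.
suff : (0 < #|` (S `\ p)%fset|)%N by [].
rewrite cardfs_gt0.
by apply/fset0Pn; exists q; rewrite in_fsetD1 eq_sym hpq hq.
Qed.

Lemma sign_help (sr X sR Y c G : rat) : 0 < sr -> 0 < X -> 0 <= sR -> Y <= 0 -> 0 < c ->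
  sr * X = sR * Y + c * G -> 0 < G.
Proof.
move=> h1 h2 h3 h4 h5 e.
have : 0 < sr * X by apply: mulr_gt0.
have : sR * Y <= 0 by rewrite mulr_ge0_le0.
move=> a b; have : 0 < c * G by lra.
by rewrite pmulr_rgt0.
Qed.

Lemma trans_help (x1 x2 y1 y2 z1 z2 : rat) : 0 < x2 - x1 -> 0 < y2 - y1 -> 0 < z2 - z1 ->
  x1 * y2 - x2 * y1 <= 0 -> y1 * z2 - y2 * z1 <= 0 -> x1 * z2 - x2 * z1 <= 0.
Proof.
move=> gx gy gz dxy dyz.
have e : (y2 - y1) * (x1 * z2 - x2 * z1) = (x2 - x1) * (y1 * z2 - y2 * z1) + (z2 - z1) * (x1 * y2 - x2 * y1) by ring.
have a : (x2 - x1) * (y1 * z2 - y2 * z1) <= 0 by rewrite mulr_ge0_le0 // ltW.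
have b : (z2 - z1) * (x1 * y2 - x2 * y1) <= 0 by rewrite mulr_ge0_le0 // ltW.
have : (y2 - y1) * (x1 * z2 - x2 * z1) <= 0 by rewrite e; lra.
by rewrite pmulr_rle0.
Qed.

Lemma sign2 (sr Nc sn Y c G : rat) : 0 < sr -> 0 <= sn -> Y <= 0 -> 0 <= c -> G <= 0 ->
  sr * Nc = sn * Y + c * G -> Nc <= 0.
Proof.
move=> h1 h2 h3 h4 h5 e.
have a : sn * Y <= 0 by rewrite mulr_ge0_le0.
have b : c * G <= 0 by rewrite mulr_ge0_le0.
have : sr * Nc <= 0 by rewrite e; lra.
by rewrite pmulr_rle0.
Qed.

Lemma sign3 (a X b Y c N : rat) : 0 < a -> 0 < X -> 0 <= b -> Y <= 0 -> 0 < c -> N <= 0 ->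
  a * X = b * Y + c * N -> False.
Proof.
move=> h1 h2 h3 h4 h5 h6 e.
have u : 0 < a * X by apply: mulr_gt0.
have v1 : b * Y <= 0 by rewrite mulr_ge0_le0.
have v2 : c * N <= 0 by rewrite mulr_ge0_le0 // ltW.
lra.
Qed.

Lemma UP (S : {fset rat * rat}) (r : int * int) (R1 : rat * rat) (p s0 : rat * rat) :
  inV r -> 0 <= R1.1 + R1.2 -> 0 < cr (dr r) R1 ->
  p \in ell S r -> (forall q, q \in ell S r -> q.2 - q.1 <= p.2 - p.1) ->
  s0 \in S -> dot R1 p < dot R1 s0 ->
  exists e, [/\ inV e, (1 < #|` ell S e|)%N, 0 < cr (dr r) (dr e) & 0 < cr (dr e) R1].
Proof.
move=> hr hR1 hrR1 /in_ell[pS pmax] hpmax s0S hs0.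
have hsr := inV_sum r hr.
move: hsr hrR1 hs0 hR1 pmax hpmax; rewrite /cr /dot /dr.
case: R1 => A B /=.
case: r hr => ri1 ri2 hr /=; set r1 : rat := ri1%:~R; set r2 : rat := ri2%:~R => hsr hrR1 hs0 hR1 pmax hpmax.
have hv t : v (ri1, ri2) t = r1 * t.1 + r2 * t.2 by [].
have g0 : p.2 - p.1 < s0.2 - s0.1.
  have := pmax s0 s0S; rewrite !hv => h.
  have id : (r1 + r2) * (A * (s0.1 - p.1) + B * (s0.2 - p.2)) =
     (A + B) * (r1 * (s0.1 - p.1) + r2 * (s0.2 - p.2)) + (r1 * B - r2 * A) * ((s0.2 - p.2) - (s0.1 - p.1)) by ring.
  have X0 : 0 < A * (s0.1 - p.1) + B * (s0.2 - p.2) by clear -hs0; lra.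
  have Y0 : r1 * (s0.1 - p.1) + r2 * (s0.2 - p.2) <= 0 by clear -h; lra.
  have := sign_help _ _ _ _ _ _ hsr X0 hR1 Y0 hrR1 id; clear; lra.
set T := [seq s <- enum_fset S | p.2 - p.1 < s.2 - s.1].
have memT s : (s \in T) = (s \in S) && (p.2 - p.1 < s.2 - s.1) by rewrite mem_filter andbC.
pose D := fun s q : rat * rat => (s.1 - p.1) * (q.2 - p.2) - (s.2 - p.2) * (q.1 - p.1).
have Dtot x y : x \in T -> y \in T -> (D x y <= 0) || (D y x <= 0).
  move=> _ _; rewrite /D; case: (lerP ((x.1 - p.1) * (y.2 - p.2) - (x.2 - p.2) * (y.1 - p.1)) 0) => h //=.
  apply/ltW; clear -h; lra.
have Dtr x y z : x \in T -> y \in T -> z \in T -> D x y <= 0 -> D y z <= 0 -> D x z <= 0.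
  rewrite !memT /D => /andP[_ gx] /andP[_ gy] /andP[_ gz] hxy hyz.
  apply: (trans_help (x.1 - p.1) (x.2 - p.2) (y.1 - p.1) (y.2 - p.2) (z.1 - p.1) (z.2 - p.2)) => //;
    clear -gx gy gz; lra.
have s0T : s0 \in T by rewrite memT s0S g0.
have [q qT qmin] := @exists_max _ (fun s q => D s q <= 0) T s0 s0T Dtot Dtr.
move: (qT); rewrite memT => /andP[qS gq].
set c1 := q.1 - p.1; set c2 := q.2 - p.2.
have [e [he [k k0 [ek1 ek2]]]] := prim_exists c2 (- c1) ltac:(rewrite /c1 /c2; clear -gq; lra).
have ve t : v e t - v e p = k * (c2 * (t.1 - p.1) - c1 * (t.2 - p.2)).
  by rewrite /v ek1 ek2; ring.
have Yq : r1 * c1 + r2 * c2 <= 0 by have := pmax q qS; rewrite !hv /c1 /c2 => h; clear -h; lra.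
have hle t : t \in S -> v e t <= v e p.
  move=> tS; rewrite -subr_le0 ve pmulr_rle0 //.
  case: (ltP (p.2 - p.1) (t.2 - t.1)) => gt.
    have := qmin t; rewrite memT tS gt /D => /(_ isT) h; rewrite /c1 /c2; clear -h; lra.
  have Yt : r1 * (t.1 - p.1) + r2 * (t.2 - p.2) <= 0.
    by have := pmax t tS; rewrite !hv => h; clear -h; lra.
  have id : (r1 + r2) * (c2 * (t.1 - p.1) - c1 * (t.2 - p.2)) =
    (c2 - c1) * (r1 * (t.1 - p.1) + r2 * (t.2 - p.2)) + (- (r1 * c1 + r2 * c2)) * ((t.2 - p.2) - (t.1 - p.1)) by ring.
  apply: (sign2 _ _ _ _ _ _ hsr _ Yt _ _ id).
  - by rewrite /c1 /c2; clear -gq; lra.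
  - by clear -Yq; lra.
  - by clear -gt; lra.
have Yq' : r1 * c1 + r2 * c2 < 0.
  rewrite lt_neqAle Yq andbT; apply/negP => /eqP hY.
  have : q \in ell S (ri1, ri2).
    apply/in_ell; split => // t tS; have := pmax t tS; rewrite !hv => h.
    move: hY; rewrite /c1 /c2 => hY; clear -h hY; lra.
  move/hpmax; clear -gq; lra.
exists e; split => //.
- apply: (card2 _ p q).
  + by apply/in_ell; split.
  + apply/in_ell; split => // t tS.
    have : v e q - v e p = 0 by rewrite ve /c1 /c2; ring.
    have := hle t tS; clear; lra.
  + apply/negP => /eqP hpq; move: gq; rewrite hpq; clear; lra.
- rewrite /cr /dr /= ek1 ek2.
  have -> : r1 * (k * - c1) - r2 * (k * c2) = k * (- (r1 * c1 + r2 * c2)) by ring.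
  by apply: mulr_gt0 => //; clear -Yq'; lra.
- rewrite /cr /dr /= ek1 ek2.
  have -> : k * c2 * B - k * - c1 * A = k * (A * c1 + B * c2) by ring.
  apply: mulr_gt0 => //; rewrite ltNge; apply/negP => hneg.
  have n0 : c2 * (s0.1 - p.1) - c1 * (s0.2 - p.2) <= 0.
    by have := hle s0 s0S; rewrite -subr_le0 ve pmulr_rle0.
  have X0 : 0 < A * (s0.1 - p.1) + B * (s0.2 - p.2) by clear -hs0; lra.
  have Y0 : r1 * (s0.1 - p.1) + r2 * (s0.2 - p.2) <= 0 by have := pmax s0 s0S; rewrite !hv => h; clear -h; lra.
  have id : (- (r1 * c1 + r2 * c2)) * (A * (s0.1 - p.1) + B * (s0.2 - p.2)) =
    (- (A * c1 + B * c2)) * (r1 * (s0.1 - p.1) + r2 * (s0.2 - p.2)) + (r1 * B - r2 * A) * (c2 * (s0.1 - p.1) - c1 * (s0.2 - p.2)) by ring.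
  apply: (sign3 _ _ _ _ _ _ _ X0 _ Y0 hrR1 n0 id).
  + by clear -Yq'; lra.
  + by clear -hneg; lra.
Qed.

Definition swp (x : rat * rat) : rat * rat := (x.2, x.1).
Definition swi (d : int * int) : int * int := (d.2, d.1).
Definition swS (S : {fset rat * rat}) : {fset rat * rat} := [fset swp x | x in S]%fset.

Lemma swpK : involutive swp. Proof. by case. Qed.
Lemma swp_inj : injective swp. Proof. exact: inv_inj swpK. Qed.

Lemma mem_swS S t : (t \in swS S) = (swp t \in S).
Proof. by rewrite -{1}(swpK t) /swS mem_imfset //; exact: swp_inj. Qed.

Lemma v_sw d t : v (swi d) (swp t) = v d t.
Proof. by rewrite /v /=; rewrite addrC. Qed.

Lemma inV_sw d : inV (swi d) = inV d.
Proof. by rewrite /inV /= gcdzC addrC. Qed.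

Lemma ell_sw S d : ell (swS S) (swi d) = swS (ell S d).
Proof.
apply/fsetP => t; rewrite mem_swS.
apply/idP/idP.
- move/in_ell => [tS tm]; apply/in_ell; split; first by rewrite -mem_swS.
  move=> u uS; rewrite -v_sw -(v_sw d (swp t)) swpK; apply: tm; by rewrite mem_swS swpK.
- move/in_ell => [tS tm]; apply/in_ell; split; first by rewrite mem_swS.
  move=> u; rewrite mem_swS => uS; have := tm _ uS; by rewrite -v_sw -(v_sw d (swp t)) !swpK.
Qed.

Lemma card_swS S : #|` swS S| = #|` S|.
Proof. by rewrite /swS card_imfset //=; exact: swp_inj. Qed.

Lemma DOWN (S : {fset rat * rat}) (r : int * int) (R2 : rat * rat) (p s0 : rat * rat) :
  inV r -> 0 <= R2.1 + R2.2 -> 0 < cr R2 (dr r) ->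
  p \in ell S r -> (forall q, q \in ell S r -> q.1 - q.2 <= p.1 - p.2) ->
  s0 \in S -> dot R2 p < dot R2 s0 ->
  exists e, [/\ inV e, (1 < #|` ell S e|)%N, 0 < cr (dr e) (dr r) & 0 < cr R2 (dr e)].
Proof.
move=> hr hR hrR hp hpm s0S hs0.
have a1 : inV (swi r) by rewrite inV_sw.
have a2 : 0 <= (swp R2).1 + (swp R2).2 by rewrite /swp /= addrC.
have a3 : 0 < cr (dr (swi r)) (swp R2) by move: hrR; rewrite /cr /dr /swp /swi /=; lra.
have a4 : swp p \in ell (swS S) (swi r) by rewrite ell_sw /swS mem_imfset //; exact: swp_inj.
have a5 : forall q, q \in ell (swS S) (swi r) -> q.2 - q.1 <= (swp p).2 - (swp p).1.
  move=> q; rewrite ell_sw mem_swS => /hpm; rewrite /swp /=; lra.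
have a6 : swp s0 \in swS S by rewrite mem_swS swpK.
have a7 : dot (swp R2) (swp p) < dot (swp R2) (swp s0) by move: hs0; rewrite /dot /swp /=; lra.
have [e' [he' hc' h1 h2]] := UP _ _ _ _ _ a1 a2 a3 a4 a5 a6 a7.
exists (swi e'); split.
- by rewrite inV_sw.
- by rewrite -(card_swS (ell S (swi e'))) -ell_sw /swi -surjective_pairing.
- by move: h1; rewrite /cr /dr /swi /=; lra.
- by move: h2; rewrite /cr /dr /swi /swp /=; lra.
Qed.

Definition lexr (a1 b1 a2 b2 : rat) := (a1 < a2) || ((a1 == a2) && (b1 <= b2)).

Lemma lex_tot a1 b1 a2 b2 : lexr a1 b1 a2 b2 || lexr a2 b2 a1 b1.
Proof.
rewrite /lexr; case: (ltgtP a1 a2) => //= h; rewrite ?orbT //.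
by case: (lerP b1 b2) => // /ltW ->; rewrite orbT.
Qed.

Lemma lex_tr a1 b1 a2 b2 a3 b3 : lexr a1 b1 a2 b2 -> lexr a2 b2 a3 b3 -> lexr a1 b1 a3 b3.
Proof.
rewrite /lexr => /orP[h1|/andP[/eqP e1 h1]] /orP[h2|/andP[/eqP e2 h2]].
- by rewrite (lt_trans h1 h2).
- by rewrite -e2 h1.
- by rewrite e1 h2.
- by rewrite e1 e2 eqxx (le_trans h1 h2) orbT.
Qed.

Lemma lex_refl a b : lexr a b a b.
Proof. by rewrite /lexr eqxx lexx orbT. Qed.

Lemma in_top (L : {fset rat * rat}) (f g : rat * rat -> rat) p :
  p \in [fset p in L | all (fun q => lexr (f q) (g q) (f p) (g p)) L]%fset <->
  p \in L /\ forall q, q \in L -> lexr (f q) (g q) (f p) (g p).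
Proof.
rewrite !inE /=; split.
  by move=> /andP[h /allP h2]; split.
by move=> [h1 h2]; rewrite h1 /=; apply/allP.
Qed.

Lemma top_prop (L : {fset rat * rat}) (f g : rat * rat -> rat) x :
  x \in L ->
  let h := head (0, 0) (enum_fset [fset p in L | all (fun q => lexr (f q) (g q) (f p) (g p)) L]%fset) in
  h \in L /\ forall q, q \in L -> lexr (f q) (g q) (f h) (g h).
Proof.
move=> xL h.
have [m mL mmax] := @exists_max _ (fun q p => lexr (f q) (g q) (f p) (g p)) (enum_fset L) x xL
  (fun a b _ _ => lex_tot _ _ _ _) (fun a b c _ _ _ => @lex_tr _ _ _ _ _ _).
apply/in_top; apply: (head_in _ (0,0) m); apply/in_top; split => //.
Qed.

Lemma top_unique (L : {fset rat * rat}) (f g : rat * rat -> rat) p :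
  p \in L ->
  (forall q, q \in L -> q != p -> (f q < f p) || ((f q == f p) && (g q < g p))) ->
  head (0, 0) (enum_fset [fset p in L | all (fun q => lexr (f q) (g q) (f p) (g p)) L]%fset) = p.
Proof.
move=> pL hq.
have pF : p \in [fset p in L | all (fun q => lexr (f q) (g q) (f p) (g p)) L]%fset.
  apply/in_top; split => // q qL; case: (eqVneq q p) => [->|ne]; first exact: lex_refl.
  by have := hq q qL ne; rewrite /lexr => /orP[->//|/andP[-> /ltW ->]]; rewrite orbT.
have := head_in _ (0,0) _ _ pF; set h := head _ _ => /in_top [hL hmax].
case: (eqVneq h p) => // ne.
have := hq h hL ne; have := hmax p pL; rewrite /lexr.
case: (ltgtP (f p) (f h)) => //= e a b.
by have := lt_le_trans b a; rewrite ltxx.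
Qed.
Lemma dr_m11 : dr (-1, 1) = (-1, 1).
Proof. by rewrite /dr /= intrN. Qed.
Lemma dr_1m1 : dr (1, -1) = (1, -1).
Proof. by rewrite /dr /= intrN. Qed.
Lemma vm11 x : v (-1, 1) x = x.2 - x.1.
Proof. by rewrite -[v _ _]/(dot (dr (-1,1)) x) dr_m11 /dot /=; ring. Qed.
Lemma v1m1 x : v (1, -1) x = x.1 - x.2.
Proof. by rewrite -[v _ _]/(dot (dr (1,-1)) x) dr_1m1 /dot /=; ring. Qed.

Definition ssum (x : rat * rat) := x.1 + x.2.

Lemma cr_id x y z : ssum y * cr x z = cr y z * ssum x + cr x y * ssum z.
Proof. rewrite /ssum /cr; ring. Qed.

Lemma ValBar_VB (K : fieldType) l (P : Weyl K) d : ValBar l P d -> VB d.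
Proof.
rewrite /ValBar /Val => /orP[/andP[h _]|/orP[/eqP->|/eqP->]]; by [constructor 1|constructor 2|constructor 3].
Qed.

Lemma VB_sum d : VB d -> 0 <= ssum (dr d).
Proof.
case=> [h|->|->]; rewrite ?dr_m11 ?dr_1m1 /ssum /=; try lra.
by apply/ltW; exact: inV_sum.
Qed.

Lemma T1 x r e : VB x -> inV r -> inV e -> 0 <= cr (dr x) (dr r) -> 0 < cr (dr r) (dr e) ->
  0 < cr (dr x) (dr e).
Proof.
move=> hx hr he h1 h2; have sr := inV_sum r hr; have se := inV_sum e he.
case: hx h1 => [hx|->|->] h1.
- have sx := inV_sum x hx.
  have := cr_id (dr x) (dr r) (dr e).
  have a : 0 < cr (dr r) (dr e) * ssum (dr x) by apply: mulr_gt0.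
  have b : 0 <= cr (dr x) (dr r) * ssum (dr e) by apply: mulr_ge0 => //; apply: ltW.
  move=> id; have : 0 < ssum (dr r) * cr (dr x) (dr e) by rewrite id; lra.
  by rewrite pmulr_rgt0.
- move: se; rewrite dr_1m1 /cr /=; lra.
- move: h1 sr; rewrite dr_m11 /cr /=; lra.
Qed.

Lemma T2 y r e : VB y -> inV r -> inV e -> 0 < cr (dr e) (dr r) -> 0 <= cr (dr r) (dr y) ->
  0 < cr (dr e) (dr y).
Proof.
move=> hy hr he h1 h2; have sr := inV_sum r hr; have se := inV_sum e he.
case: hy h2 => [hy|->|->] h2.
- have sy := inV_sum y hy.
  have := cr_id (dr e) (dr r) (dr y).
  have a : 0 < cr (dr e) (dr r) * ssum (dr y) by apply: mulr_gt0.
  have b : 0 <= cr (dr r) (dr y) * ssum (dr e) by apply: mulr_ge0 => //; apply: ltW.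
  move=> id; have : 0 < ssum (dr r) * cr (dr e) (dr y) by rewrite id; lra.
  by rewrite pmulr_rgt0.
- move: h2 sr; rewrite dr_1m1 /cr /=; lra.
- move: se; rewrite dr_m11 /cr /=; lra.
Qed.

Lemma card_other (A : {fset rat * rat}) p : p \in A -> (1 < #|` A|)%N -> exists2 q, q \in A & q != p.
Proof.
move=> pA; rewrite (cardfsD1 p) pA => h.
have : (0 < #|` (A `\ p)%fset|)%N by [].
rewrite cardfs_gt0 => /fset0Pn [q]; rewrite in_fsetD1 => /andP[qp qA].
by exists q.
Qed.

Lemma key3 (a1 a2 b1 b2 c1 c2 : rat) : 0 < a1 + a2 -> 0 < b1 + b2 -> 0 < a1 * b2 - a2 * b1 ->
  a1 * c1 + a2 * c2 < 0 -> b1 * c1 + b2 * c2 = 0 -> 0 < c2 - c1.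
Proof.
move=> sa sb cab ac bc.
have id : (a1 + a2) * (b1 * c1 + b2 * c2) = (b1 + b2) * (a1 * c1 + a2 * c2) + (a1 * b2 - a2 * b1) * (c2 - c1) by ring.
rewrite bc mulr0 in id.
have t : (b1 + b2) * (a1 * c1 + a2 * c2) < 0 by rewrite pmulr_rlt0.
have : 0 < (a1 * b2 - a2 * b1) * (c2 - c1) by lra.
by rewrite pmulr_rgt0.
Qed.

Lemma key3' (a1 a2 b1 b2 c1 c2 : rat) : 0 < a1 + a2 -> 0 < b1 + b2 -> 0 < b1 * a2 - b2 * a1 ->
  a1 * c1 + a2 * c2 < 0 -> b1 * c1 + b2 * c2 = 0 -> 0 < c1 - c2.
Proof.
move=> sa sb cab ac bc; apply: (key3 a2 a1 b2 b1); rewrite 1?addrC //; try lra.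
Qed.

Lemma key3w (a1 a2 c1 c2 : rat) : 0 < a1 + a2 -> a1 * c1 + a2 * c2 < 0 -> c2 - c1 = 0 -> c1 < 0.
Proof.
move=> sa ac g; have e : c2 = c1 by lra.
move: ac; rewrite e -mulrDl => h; rewrite -(pmulr_rlt0 _ sa); exact: h.
Qed.

Lemma key3w' (a1 a2 c1 c2 : rat) : 0 < a1 + a2 -> a1 * c1 + a2 * c2 < 0 -> c1 - c2 = 0 -> c2 < 0.
Proof. move=> sa ac g; apply: (key3w a2 a1 c2 c1); lra. Qed.

Lemma key1 (a1 a2 b1 b2 c1 c2 : rat) : 0 < a1 + a2 -> 0 < b1 + b2 -> 0 < a1 * b2 - a2 * b1 ->
  a1 * c1 + a2 * c2 <= 0 -> b1 * c1 + b2 * c2 = 0 -> (c1 != 0) || (c2 != 0) -> 0 < c2 - c1.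
Proof.
move=> sa sb cab ac bc cn0.
have id : (a1 + a2) * (b1 * c1 + b2 * c2) = (b1 + b2) * (a1 * c1 + a2 * c2) + (a1 * b2 - a2 * b1) * (c2 - c1) by ring.
rewrite bc mulr0 in id.
rewrite ltNge; apply/negP => g.
have t1 : (b1 + b2) * (a1 * c1 + a2 * c2) <= 0 by rewrite pmulr_rle0.
have t2 : (a1 * b2 - a2 * b1) * (c2 - c1) <= 0 by rewrite pmulr_rle0.
have z1 : (b1 + b2) * (a1 * c1 + a2 * c2) = 0 by lra.
have z2 : (a1 * b2 - a2 * b1) * (c2 - c1) = 0 by lra.
move: z1 z2 => /eqP; rewrite mulf_eq0 (gt_eqF sb) /= => /eqP z1 /eqP; rewrite mulf_eq0 (gt_eqF cab) /= => /eqP z2.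
have e : c2 = c1 by lra.
move: z1; rewrite e -mulrDl => /eqP; rewrite mulf_eq0 (gt_eqF sa) /= => /eqP e1.
by move: cn0; rewrite e e1 eqxx.
Qed.

Lemma key1' (a1 a2 b1 b2 c1 c2 : rat) : 0 < a1 + a2 -> 0 < b1 + b2 -> 0 < b1 * a2 - b2 * a1 ->
  a1 * c1 + a2 * c2 <= 0 -> b1 * c1 + b2 * c2 = 0 -> (c1 != 0) || (c2 != 0) -> 0 < c1 - c2.
Proof.
move=> sa sb cab ac bc cn; apply: (key1 a2 a1 b2 b1); rewrite 1?addrC 1?orbC //; lra.
Qed.

Lemma keyV (x1 x2 e1 e2 c1 c2 : rat) : 0 < c2 - c1 -> 0 < e1 + e2 -> e1 * c1 + e2 * c2 = 0 ->
  x1 * c1 + x2 * c2 <= 0 -> 0 <= x1 * e2 - x2 * e1.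
Proof.
move=> g se ec xc.
have id : (c2 - c1) * (x1 * e2 - x2 * e1) + (e1 + e2) * (x1 * c1 + x2 * c2) = (x1 + x2) * (e1 * c1 + e2 * c2) by ring.
rewrite ec mulr0 in id.
have t : (e1 + e2) * (x1 * c1 + x2 * c2) <= 0 by rewrite pmulr_rle0.
have : 0 <= (c2 - c1) * (x1 * e2 - x2 * e1) by lra.
by rewrite pmulr_rge0.
Qed.

Lemma keyV' (x1 x2 e1 e2 c1 c2 : rat) : 0 < c1 - c2 -> 0 < e1 + e2 -> e1 * c1 + e2 * c2 = 0 ->
  x1 * c1 + x2 * c2 <= 0 -> 0 <= e1 * x2 - e2 * x1.
Proof.
move=> g se ec xc.
have := keyV x2 x1 e2 e1 c2 c1 g ltac:(lra) ltac:(lra) ltac:(lra); lra.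
Qed.

Lemma ell_ne (S : {fset rat * rat}) d x : x \in S -> exists p, p \in ell S d.
Proof.
move=> xS.
have [m mS mmax] := @exists_max _ (fun q p => v d q <= v d p) (enum_fset S) x xS
  (fun a b _ _ => le_total _ _) (fun a b c _ _ _ => @le_trans _ _ _ _ _).
by exists m; apply/in_ell; split.
Qed.

Theorem proposition2p23 (K : fieldType) (charK : [pchar K] =i pred0)
  (l : nat) (hl : (0 < l)%N) (P : Weyl K) (hP : exists k, P k != 0)
  (r1 r2 : int * int) :
  ValBar l P r1 -> ValBar l P r2 -> ltV r2 r1 ->
  (forall e, ValBar l P e -> ~~ (ltV r2 e && ltV e r1)) ->
  forall r : int * int, inV r ->
  [/\ (Val l P r1 -> ltV r r1 -> leV r2 r -> SuccIs l r P r1),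
      (Val l P r2 -> leV r r1 -> ltV r2 r -> PredIs l r P r2) &
      (ltV r r1 -> ltV r2 r ->
         [fset st l r1 P]%fset = ellSupp l r P /\ ellSupp l r P = [fset en l r2 P]%fset)].
Proof.
move=> hr1 hr2 hlt hcons r hr.
rewrite /SuccIs /PredIs /Valsup /Valinf /Val !ellE.
set S := Supp l P.
have [x0 x0S] : exists x, x \in S.
  case: hP => k hk; exists (pt l k); apply/imfsetP; exists k => //; by rewrite mem_finsupp.
have VB1 := ValBar_VB K l P r1 hr1.
have VB2 := ValBar_VB K l P r2 hr2.
have noVal e : inV e -> (1 < #|` ell S e|)%N -> 0 < cr (dr r2) (dr e) -> 0 < cr (dr e) (dr r1) -> False.
  move=> he hc h2 h1; have := hcons e; rewrite /ValBar /Val; change (ellSupp l e P) with (ell S e); rewrite he hc /=.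
  by rewrite (proj1 (lt_cr e r1 he VB1)) (proj2 (lt_cr e r2 he VB2)) h1 h2 => /(_ isT).
have sr := inV_sum r hr.
have enP : en l r P \in ell S r /\ forall q, q \in ell S r ->
    lexr (q.2 - q.1) q.2 ((en l r P).2 - (en l r P).1) (en l r P).2.
  have [y yin] := ell_ne S r x0 x0S.
  exact: (top_prop (ell S r) (fun q => q.2 - q.1) (fun q => q.2) y yin).
have stP : st l r P \in ell S r /\ forall q, q \in ell S r ->
    lexr (q.1 - q.2) q.1 ((st l r P).1 - (st l r P).2) (st l r P).1.
  have [y yin] := ell_ne S r x0 x0S.
  exact: (top_prop (ell S r) (fun q => q.1 - q.2) (fun q => q.1) y yin).
split.
- move=> /andP[h1V hc1] hrr1 hr2r.
  have c1 : 0 < cr (dr r) (dr r1) by rewrite -(proj1 (lt_cr r r1 hr VB1)).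
  have c2 : 0 <= cr (dr r2) (dr r) by rewrite -(proj2 (le_cr r r2 hr VB2)).
  have [pin pmaxl] := enP.
  set p := en l r P in pin pmaxl *.
  have [pS pmax] := proj1 (in_ell S r p) pin.
  have hpm : forall q, q \in ell S r -> q.2 - q.1 <= p.2 - p.1.
    move=> q /pmaxl; rewrite /lexr => /orP[/ltW //|/andP[/eqP -> _]] //.
  have p1 : p \in ell S r1.
    case E: (p \in ell S r1) => //.
    move: E; rewrite !inE pS /= => /negbT /allPn [s0 s0S hs0].
    have hs0' : dot (dr r1) p < dot (dr r1) s0 by rewrite ltNge.
    have [e [he hc hre her1]] := UP S r (dr r1) p s0 hr (VB_sum r1 VB1) c1 pin hpm s0S hs0'.
    exfalso; exact: (noVal e he hc (T1 r2 r e VB2 hr he c2 hre) her1).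
  have [pS1 pm1] := proj1 (in_ell S r1 p) p1.
  have [q qin ne] := card_other (ell S r1) p p1 hc1.
  have [qS qm] := proj1 (in_ell _ _ _) qin.
  have e1 : v r1 q = v r1 p by apply/eqP; rewrite eq_le (qm p pS) (pm1 q qS).
  have cn : (q.1 - p.1 != 0) || (q.2 - p.2 != 0).
    rewrite -negb_and; apply/negP => /andP[/eqP a /eqP b]; move/eqP: ne; apply.
    have : (q.1, q.2) = (p.1, p.2) by congr pair; clear -a b; lra.
    by rewrite -!surjective_pairing.
  have gq : 0 < (q.2 - p.2) - (q.1 - p.1).
    have sr1 := inV_sum r1 h1V.
    have a1 := pmax q qS.
    move: e1 a1 c1 sr sr1; rewrite /v /cr /dr /= => e1 a1 c1' sr' sr1.
    exact: (key1 _ _ _ _ (q.1 - p.1) (q.2 - p.2) sr' sr1 c1' ltac:(clear -a1; lra) ltac:(clear -e1; lra) cn).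
  split.
  + exists q => //; split; first by rewrite !vm11; clear -gq; lra.
    split => //; move: e1; rewrite /v /psub /= => e1; clear -e1; lra.
  + move=> e' [s sS [gs [he' es]]].
    rewrite (proj1 (le_cr r1 e' h1V (Or31 _ _ he'))).
    have a1 := pm1 s sS.
    have se := inV_sum e' he'.
    move: es gs a1 se; rewrite !vm11 /v /psub /cr /dr /= => es gs a1 se.
    apply: (keyV _ _ _ _ (s.1 - p.1) (s.2 - p.2) _ se); [clear -gs; lra | exact: es | clear -a1; lra].
- move=> /andP[h2V hc2] hrr1 hr2r.
  have c1 : 0 <= cr (dr r) (dr r1) by rewrite -(proj1 (le_cr r r1 hr VB1)).
  have c2 : 0 < cr (dr r2) (dr r) by rewrite -(proj2 (lt_cr r r2 hr VB2)).
  have [pin pmaxl] := stP.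
  set p := st l r P in pin pmaxl *.
  have [pS pmax] := proj1 (in_ell S r p) pin.
  have hpm : forall q, q \in ell S r -> q.1 - q.2 <= p.1 - p.2.
    move=> q /pmaxl; rewrite /lexr => /orP[/ltW //|/andP[/eqP -> _]] //.
  have p2 : p \in ell S r2.
    case E: (p \in ell S r2) => //.
    move: E; rewrite !inE pS /= => /negbT /allPn [s0 s0S hs0].
    have hs0' : dot (dr r2) p < dot (dr r2) s0 by rewrite ltNge.
    have [e [he hc her h2]] := DOWN S r (dr r2) p s0 hr (VB_sum r2 VB2) c2 pin hpm s0S hs0'.
    exfalso; exact: (noVal e he hc h2 (T2 r1 r e VB1 hr he her c1)).
  have [pS2 pm2] := proj1 (in_ell S r2 p) p2.
  have [q qin ne] := card_other (ell S r2) p p2 hc2.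
  have [qS qm] := proj1 (in_ell _ _ _) qin.
  have e1 : v r2 q = v r2 p by apply/eqP; rewrite eq_le (qm p pS) (pm2 q qS).
  have cn : (q.1 - p.1 != 0) || (q.2 - p.2 != 0).
    rewrite -negb_and; apply/negP => /andP[/eqP a /eqP b]; move/eqP: ne; apply.
    have : (q.1, q.2) = (p.1, p.2) by congr pair; clear -a b; lra.
    by rewrite -!surjective_pairing.
  have gq : 0 < (q.1 - p.1) - (q.2 - p.2).
    have sr2 := inV_sum r2 h2V.
    have a1 := pmax q qS.
    move: e1 a1 c2 sr sr2; rewrite /v /cr /dr /= => e1 a1 c2' sr' sr2.
    exact: (key1' _ _ _ _ (q.1 - p.1) (q.2 - p.2) sr' sr2 c2' ltac:(clear -a1; lra) ltac:(clear -e1; lra) cn).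
  split.
  + exists q => //; split; first by rewrite !v1m1; clear -gq; lra.
    split => //; move: e1; rewrite /v /psub /= => e1; clear -e1; lra.
  + move=> e' [s sS [gs [he' es]]].
    rewrite (proj1 (le_cr e' r2 he' VB2)).
    have a1 := pm2 s sS.
    have se := inV_sum e' he'.
    move: es gs a1 se; rewrite !v1m1 /v /psub /cr /dr /= => es gs a1 se.
    apply: (keyV' _ _ _ _ (s.1 - p.1) (s.2 - p.2) _ se); [clear -gs; lra | exact: es | clear -a1; lra].
- move=> hrr1 hr2r.
  have c1 : 0 < cr (dr r) (dr r1) by rewrite -(proj1 (lt_cr r r1 hr VB1)).
  have c2 : 0 < cr (dr r2) (dr r) by rewrite -(proj2 (lt_cr r r2 hr VB2)).
  have [p pin] := ell_ne S r x0 x0S.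
  have uniq q : q \in ell S r -> q = p.
    move=> qin; case: (eqVneq q p) => // ne; exfalso.
    exact: (noVal r hr (card2 _ q p qin pin ne) c2 c1).
  have [pS pmax] := proj1 (in_ell S r p) pin.
  have strict q : q \in S -> q != p -> v r q < v r p.
    move=> qS ne; rewrite lt_neqAle pmax // andbT; apply/negP => /eqP e.
    move/eqP: ne; apply; apply: uniq; apply/in_ell; split => // t tS; rewrite e; exact: pmax.
  have hpm : forall q, q \in ell S r -> q.2 - q.1 <= p.2 - p.1 by move=> q /uniq ->.
  have hpm' : forall q, q \in ell S r -> q.1 - q.2 <= p.1 - p.2 by move=> q /uniq ->.
  have p1 : p \in ell S r1.
    case E: (p \in ell S r1) => //.
    move: E; rewrite !inE pS /= => /negbT /allPn [s0 s0S hs0].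
    have hs0' : dot (dr r1) p < dot (dr r1) s0 by rewrite ltNge.
    have [e [he hc hre her1]] := UP S r (dr r1) p s0 hr (VB_sum r1 VB1) c1 pin hpm s0S hs0'.
    exfalso; exact: (noVal e he hc (T1 r2 r e VB2 hr he (ltW c2) hre) her1).
  have p2 : p \in ell S r2.
    case E: (p \in ell S r2) => //.
    move: E; rewrite !inE pS /= => /negbT /allPn [s0 s0S hs0].
    have hs0' : dot (dr r2) p < dot (dr r2) s0 by rewrite ltNge.
    have [e [he hc her h2]] := DOWN S r (dr r2) p s0 hr (VB_sum r2 VB2) c2 pin hpm' s0S hs0'.
    exfalso; exact: (noVal e he hc h2 (T2 r1 r e VB1 hr he her (ltW c1))).
  have ellr : ell S r = [fset p]%fset.
    by apply/fsetP => x; rewrite in_fset1; apply/idP/eqP => [/uniq|->].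
  have stE : st l r1 P = p.
    rewrite /st; change (ellSupp l r1 P) with (ell S r1).
    apply: (top_unique (ell S r1) (fun q => q.1 - q.2) (fun q => q.1) p p1).
    move=> q qin ne; have [qS qm] := proj1 (in_ell _ _ _) qin.
    have e1 : v r1 q = v r1 p.
      by apply/eqP; rewrite eq_le (qm p pS) (proj2 (proj1 (in_ell _ _ _) p1) q qS).
    have vr := strict q qS ne.
    case: VB1 c1 e1 => [h1V|->|->] c1 e1.
    + apply/orP; left; have sr1 := inV_sum r1 h1V.
      move: e1 vr c1 sr sr1; rewrite /v /cr /dr /= => e1 vr c1 sr sr1.
      have := key3 _ _ _ _ (q.1 - p.1) (q.2 - p.2) sr sr1 c1 ltac:(clear -vr; lra) ltac:(clear -e1; lra).
      clear; lra.
    + by move: c1 sr; rewrite dr_1m1 /cr /=; lra.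
    + rewrite !vm11 in e1; apply/orP; right; apply/andP; split.
        by apply/eqP; clear -e1; lra.
      move: vr sr; rewrite /v /dr /= => vr sr.
      have := key3w _ _ (q.1 - p.1) (q.2 - p.2) sr ltac:(clear -vr; lra) ltac:(clear -e1; lra).
      clear; lra.
  have enE : en l r2 P = p.
    rewrite /en; change (ellSupp l r2 P) with (ell S r2).
    apply: (top_unique (ell S r2) (fun q => q.2 - q.1) (fun q => q.2) p p2).
    move=> q qin ne; have [qS qm] := proj1 (in_ell _ _ _) qin.
    have e1 : v r2 q = v r2 p.
      by apply/eqP; rewrite eq_le (qm p pS) (proj2 (proj1 (in_ell _ _ _) p2) q qS).
    have vr := strict q qS ne.
    case: VB2 c2 e1 => [h2V|->|->] c2 e1.
    + apply/orP; left; have sr2 := inV_sum r2 h2V.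
      move: e1 vr c2 sr sr2; rewrite /v /cr /dr /= => e1 vr c2 sr sr2.
      have := key3' _ _ _ _ (q.1 - p.1) (q.2 - p.2) sr sr2 c2 ltac:(clear -vr; lra) ltac:(clear -e1; lra).
      clear; lra.
    + rewrite !v1m1 in e1; apply/orP; right; apply/andP; split.
        by apply/eqP; clear -e1; lra.
      move: vr sr; rewrite /v /dr /= => vr sr.
      have := key3w' _ _ (q.1 - p.1) (q.2 - p.2) sr ltac:(clear -vr; lra) ltac:(clear -e1; lra).
      clear; lra.
    + by move: c2 sr; rewrite dr_m11 /cr /=; lra.
  by split; [rewrite stE ellr | rewrite ellr enE].
Qed.
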